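(* Let $X$ be a finite set, $G\le S_X$, $Y=\mathrm{Fol}_r(G)$, $F=N_{S_X}(G)$, and consider the action of $F$ on $Y$ given by $(\lambda_x:x\in X/G)f=(\kappa_x:x\in X/G)$ with $\kappa_x=((\lambda_{yg_y^{-1}})^{g_y})^f$, $y=xf^{-1}$. For $f\in F$, let $\bar f$ be the permutation of $X/G$ induced by $f$ (sending $w\in X/G$ to the representative of the orbit $(wf)G$), $\mathrm{Cyc}(\bar f)$ a complete set of cycle representatives of $\bar f$, and $c(\bar f,x)$ the cycle of $\bar f$ containing $x\in\mathrm{Cyc}(\bar f)$. Then there is a one-to-one correspondence between the set $\mathrm{Fix}(Y,f)=\{\Lambda\in Y:\Lambda f=\Lambda\}$ and the tuples $(c_x:x\in\mathrm{Cyc}(\bar f))$, where each $c_x$ is a short directed cycle of $\Gamma_r(G,f)$ with vertices in $\bigcup_{y\in c(\bar f,x)}C_G(G_y)$. Consequently, the number of orbits of $F$ on $Y$ is $$|Y/F|=\frac{1}{|F|}\sum_{f\in F}|\mathrm{Fix}(Y,f)|=\frac{1}{|F|}\sum_{f\in F}\prod_{x\in\mathrm{Cyc}(\bar f)}\gamma_r(G,f,x),$$ where $\gamma_r(G,f,x)$ is the number of short directed cycles of $\Gamma_r(G,f)$ with vertices in $\bigcup_{y\in c(\bar f,x)}C_G(G_y)$.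
   Context: Permutations act on the right ($xf$ is the image of $x$ under $f$; $fg$ means $f$ first, then $g$); $g^f=f^{-1}gf$. For $G\le S_X$, $xG$ is the orbit of $x$, $G_x$ its stabilizer, $X/G$ a fixed complete set of orbit representatives; $C_G(H)$ is the centralizer and $N_{S_X}(G)$ the normalizer. $\mathrm{Fol}_r(G)=\prod_{x\in X/G}C_G(G_x)$ is the set of rack folders, i.e., tuples $(\lambda_x:x\in X/G)$ with $\lambda_x\in C_G(G_x)$. For every $y\in X$ fix $g_y\in G$ with $xg_y=y$, where $x$ is the representative in $X/G$ of the orbit of $y$. The digraph (possibly with loops) $\Gamma_r(G,f)$, for $f\in N_{S_X}(G)$, has vertex set the formally disjoint union of the sets $C_G(G_x)$, $x\in X/G$; for $x,z\in X/G$, $\kappa_x\in C_G(G_x)$ and $\lambda_z\in C_G(G_z)$, there is a directed edge $\lambda_z\to\kappa_x$ if and only if, with $y=xf^{-1}$, we have $z=yg_y^{-1}$ and $\kappa_x=((\lambda_z)^{g_y})^f$. A directed cycle of $\Gamma_r(G,f)$ is short if it intersects every vertex set $C_G(G_x)$ at most once. *)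

(* Defs.v *)
From HB Require Import structures.
From mathcomp Require Import all_boot all_order all_algebra all_fingroup.
From mathcomp Require boolp.
Set Implicit Arguments. Unset Strict Implicit. Unset Printing Implicit Defensive.

Local Open Scope group_scope.

(* X is the finite type T; permutations act on the right as in mathcomp:
   (s * t) x = t (s x), and a ^ b = b^-1 * a * b.
   The fixed complete set X/G of orbit representatives is encoded by the
   function rep : T -> T (rep y = the representative of the orbit of y),
   and the chosen elements g_y by g : T -> {perm T}. *)

Definition reps (T : finType) (rep : T -> T) : {set T} := [set rep x | x : T].

Definition CGstab (T : finType) (G : {group {perm T}}) (x : T) : {set {perm T}} :=
  'C_G('C_G[x | 'P]).

(* rack folders Fol_r(G), a tuple indexed by X/G, encoded as a finite function
   that is 1 outside X/G *)
Definition folders (T : finType) (G : {group {perm T}}) (rep : T -> T)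
  : {set {ffun T -> {perm T}}} :=
  [set L : {ffun T -> {perm T}} | [forall x, if x \in reps rep
        then L x \in CGstab G x else L x == 1]].

Definition fol_act (T : finType) (rep : T -> T) (g : T -> {perm T})
  (L : {ffun T -> {perm T}}) (f : {perm T}) : {ffun T -> {perm T}} :=
  [ffun x => if x \in reps rep then
     let y := (f^-1) x in ((L ((g y)^-1 y)) ^ (g y)) ^ f else 1].

Definition fol_fix (T : finType) (G : {group {perm T}}) (rep : T -> T)
  (g : T -> {perm T}) (f : {perm T}) : {set {ffun T -> {perm T}}} :=
  [set L in folders G rep | fol_act rep g L f == L].

Definition fol_orbits (T : finType) (G : {group {perm T}}) (rep : T -> T)
  (g : T -> {perm T}) : {set {set {ffun T -> {perm T}}}} :=
  [set [set fol_act rep g L f | f in 'N(G)] | L in folders G rep].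

Definition fbar (T : finType) (rep : T -> T) (f : {perm T}) : T -> T :=
  fun w => rep (f w).

Definition fcyc (T : finType) (rep : T -> T) (f : {perm T}) (x : T) : {set T} :=
  [set w | fconnect (fbar rep f) x w].

Definition cycle_reps (T : finType) (rep : T -> T) (f : {perm T}) (C : {set T}) :=
  C \subset reps rep /\
  forall w, w \in reps rep -> #|[set x in C | fconnect (fbar rep f) x w]| = 1%N.

(* The digraph Gamma_r(G, f): vertices are pairs (x, kappa) with x in X/G and
   kappa in C_G(G_x) (the formally disjoint union). *)
Definition gvert (T : finType) (G : {group {perm T}}) (rep : T -> T)
  : {set T * {perm T}} :=
  [set v | (v.1 \in reps rep) && (v.2 \in CGstab G v.1)].

Definition gedge (T : finType) (G : {group {perm T}}) (rep : T -> T)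
  (g : T -> {perm T}) (f : {perm T}) : rel (T * {perm T}) :=
  fun u v => [&& u \in gvert G rep, v \in gvert G rep &
     let y := (f^-1) v.1 in (u.1 == (g y)^-1 y) && (v.2 == (u.2 ^ (g y)) ^ f)].

(* A directed cycle (loops allowed, length >= 1) of a digraph E, identified
   with its set of edges: the edges (s_i, s_{i+1 mod k}) of a nonempty
   duplicate-free closed walk s. *)
Definition is_dcycle (V : finType) (E : rel V) (A : {set V * V}) : Prop :=
  exists s : seq V, [/\ s != [::], uniq s, path.cycle E s &
                        A = [set e in zip s (rot 1 s)]].

Definition dcverts (V : finType) (A : {set V * V}) : {set V} := [set e.1 | e in A].

Definition dc_short (T : finType) (A : {set (T * {perm T}) * (T * {perm T})}) :=
  [forall x : T, #|[set v in dcverts A | v.1 == x]| <= 1].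

Definition short_cycles (T : finType) (G : {group {perm T}}) (rep : T -> T)
  (g : T -> {perm T}) (f : {perm T}) (x : T)
  : {set {set (T * {perm T}) * (T * {perm T})}} :=
  [set A | [&& boolp.asbool (is_dcycle (gedge G rep g f) A), dc_short A &
              dcverts A \subset [set v | v.1 \in fcyc rep f x]]].

Definition gamma_r (T : finType) (G : {group {perm T}}) (rep : T -> T)
  (g : T -> {perm T}) (f : {perm T}) (x : T) : nat :=
  #|short_cycles G rep g f x|.

(* tuples (c_x : x in Cyc(fbar)) of such cycles, encoded as finite functions
   that are set0 outside Cyc(fbar) *)
Definition cycle_tuples (T : finType) (G : {group {perm T}}) (rep : T -> T)
  (g : T -> {perm T}) (f : {perm T}) (C : {set T})
  : {set {ffun T -> {set (T * {perm T}) * (T * {perm T})}}} :=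
  [set c : {ffun T -> {set (T * {perm T}) * (T * {perm T})}} | [forall x, if x \in C then c x \in short_cycles G rep g f x
                      else c x == set0]].

(* Main.v *)
Require Import Defs.
From HB Require Import structures.
From mathcomp Require Import all_boot all_order all_algebra all_fingroup.
From mathcomp Require boolp.
Set Implicit Arguments. Unset Strict Implicit. Unset Printing Implicit Defensive.
Local Open Scope group_scope.

Lemma zip_rcons_mem (V : eqType) (h : V -> V) x p y e :
  path (frel h) x (rcons p y) ->
  (e \in zip (x :: p) (rcons p y)) = (e.1 \in x :: p) && (e.2 == h e.1).
Proof.
elim: p x => [|a p IH] x /= ; first case: e => e1 e2 /=.
  rewrite andbT => /eqP <-.
  by rewrite !inE xpair_eqE; case: eqP => // ->.
move=> /andP[/eqP hx P]; rewrite [e \in _]in_cons IH //; move: IH; case: e => e1 e2 /= _.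
rewrite xpair_eqE -hx.
case: (e1 =P x) => [->|ne] /=.
  by rewrite mem_head; case: (e2 == h x); rewrite ?andbF.
by rewrite [e1 \in x :: _]in_cons (introF eqP ne).
Qed.

Lemma cycle_zip (V : eqType) (h : V -> V) (s : seq V) (e : V * V) : s != [::] -> path.cycle (frel h) s ->
  (e \in zip s (rot 1 s)) = (e.1 \in s) && (e.2 == h e.1).
Proof. by case: s => // x p _; rewrite rot1_cons /=; apply: zip_rcons_mem. Qed.

Lemma closed_conn (V : finType) (h : V -> V) (P : pred V) x y :
  (forall z, P z -> P (h z)) -> fconnect h x y -> P x -> P y.
Proof.
move=> cl /iter_findex <-; elim: (findex h x y) => //= n IH Px.
by apply: cl; apply: IH.
Qed.

Section Main.
Variables (T : finType) (G : {group {perm T}}) (rep : T -> T) (g : T -> {perm T}).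
Hypothesis hrep_orb : forall y, rep y \in orbit 'P G y.
Hypothesis hrep_eq : forall y y', y' \in orbit 'P G y -> rep y' = rep y.
Hypothesis hg : forall y, g y \in G /\ g y (rep y) = y.

Local Notation R := (reps rep).

Lemma repG k a : k \in G -> rep (k a) = rep a.
Proof. by move=> kG; apply: hrep_eq; apply/orbitP; exists k. Qed.

Lemma rep_rep y : rep (rep y) = rep y.
Proof. exact: hrep_eq (hrep_orb y). Qed.

Lemma inRP x : (x \in R) = (rep x == x).
Proof.
apply/imsetP/eqP => [[y _ ->]|<-]; first exact: rep_rep.
by exists x.
Qed.

Lemma repR y : rep y \in R.
Proof. by rewrite inRP rep_rep. Qed.

Lemma g_inv y : (g y)^-1 y = rep y.
Proof. by have := permK (g y) (rep y); rewrite (proj2 (hg y)). Qed.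

Lemma gG y : g y \in G. Proof. exact: (proj1 (hg y)). Qed.

Lemma rep_ex a : exists2 k, k \in G & rep a = k a.
Proof. by case/orbitP: (hrep_orb a) => k kG <-; exists k. Qed.

Lemma rep_p_rep p a : p \in 'N(G) -> rep (p (rep a)) = rep (p a).
Proof.
move=> nGp; case: (rep_ex a) => k kG ->.
have -> : p (k a) = (k ^ p) (p a).
  by rewrite conjgE !permM permK.
by rewrite repG // memJ_norm.
Qed.

Lemma CGstabJ p z k : p \in 'N(G) -> k \in CGstab G z -> k ^ p \in CGstab G (p z).
Proof.
move=> nGp kC.
have -> : CGstab G (p z) = CGstab G z :^ p.
  rewrite /CGstab.
  have -> : 'C_G[p z | 'P] = 'C_G[z | 'P] :^ p.
    by rewrite conjIg (normP nGp) -astab1_act.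
  by rewrite [RHS]conjIg -centJ (normP nGp).
by rewrite memJ_conjg.
Qed.

Lemma CGstab_fix r k m : k \in CGstab G r -> m \in G -> m r = r -> k ^ m = k.
Proof.
move=> /setIP[_ /centP kC] mG mr.
have mS : m \in 'C_G[r | 'P] by rewrite inE mG; apply/astab1P.
by rewrite conjgE (kC m mS) mulKg.
Qed.

Lemma folP (L : {ffun T -> {perm T}}) : reflect (forall x, if x \in R then L x \in CGstab G x else L x == 1)
   (L \in folders G rep).
Proof.
by rewrite inE; apply: (iffP forallP).
Qed.

Lemma fol_act_folders L a : L \in folders G rep -> a \in 'N(G) ->
  fol_act rep g L a \in folders G rep.
Proof.
move=> /folP LF nGa; apply/folP => x; rewrite /fol_act ffunE; case xR: (x \in R) => //.
set y := a^-1 x.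
have := LF (rep y); rewrite repR g_inv => /(CGstabJ (subsetP (normG G) _ (gG y))).
rewrite (proj2 (hg y)) => /(CGstabJ nGa).
by rewrite /y permKV.
Qed.

Lemma fol_act1 L : L \in folders G rep -> fol_act rep g L 1 = L.
Proof.
move=> /folP LF; apply/ffunP => x; rewrite /fol_act ffunE.
have := LF x; case xR: (x \in R); last by move/eqP->.
rewrite invg1 perm1 conjg1 g_inv.
have rx : rep x = x by apply/eqP; rewrite -inRP.
rewrite rx => Lx; apply: (CGstab_fix Lx (gG x)).
by have := proj2 (hg x); rewrite rx.
Qed.

Lemma fol_actM L a b : L \in folders G rep -> a \in 'N(G) -> b \in 'N(G) ->
  fol_act rep g L (a * b) = fol_act rep g (fol_act rep g L a) b.
Proof.
move=> /folP LF nGa nGb; apply/ffunP => w; rewrite !ffunE.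
case wR: (w \in R) => //.
cbv zeta; rewrite !g_inv ffunE repR; cbv zeta; rewrite !g_inv invMg permM.
set u := b^-1 w; set y := a^-1 u; set v := a^-1 (rep u).
have rv : rep v = rep y by rewrite /v /y rep_p_rep // groupV.
rewrite rv.
have := LF (rep y); rewrite repR => Ly.
rewrite -!conjgM.
set m := (g v * a * g u * b) * (g y * (a * b))^-1.
have -> : g v * (a * (g u * b)) = m * (g y * (a * b)) by rewrite mulgKV !mulgA.
rewrite (conjgM (L (rep y)) m) (CGstab_fix Ly (m:=m)) //.
  rewrite /m invMg invMg !mulgA mulgK.
  have -> : g v * a * g u * a^-1 = g v * (g u ^ a^-1) by rewrite conjgE invgK !mulgA.
  apply: groupM; [apply: groupM; [exact: gG | by rewrite memJ_norm ?groupV ?gG] | by rewrite groupV gG].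
rewrite /m invMg invMg !mulgA mulgK !permM.
by rewrite -{1}rv (proj2 (hg v)) /v permKV (proj2 (hg u)) -/y g_inv.
Qed.

Definition act' (L : {ffun T -> {perm T}}) (a : {perm T}) :=
  if (L \in folders G rep) && (a \in 'N(G)) then fol_act rep g L a else L.

Lemma act'_is_action : is_action 'N(G) act'.
Proof.
split.
  move=> a L1 L2; rewrite /act'; case nGa: (a \in 'N(G)); rewrite ?andbT ?andbF //.
  case: (boolP (L1 \in folders G rep)) => F1; case: (boolP (L2 \in folders G rep)) => F2 //.
  - move=> H; rewrite -(fol_act1 F1) -(fol_act1 F2) -(mulgV a).
    by rewrite !fol_actM ?groupV // H.
  - by move=> H; move: F2; rewrite -H fol_act_folders.
  - by move=> H; move: F1; rewrite H fol_act_folders.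
move=> L a b nGa nGb; rewrite /act' nGa nGb groupM //.
case LF: (L \in folders G rep); rewrite /= ?LF //.
by rewrite fol_act_folders //= fol_actM.
Qed.

Definition folAction := Action act'_is_action.

Lemma acts_fol : [acts 'N(G), on folders G rep | folAction].
Proof.
apply/subsetP => a nGa; rewrite inE nGa inE /=; apply/subsetP => L LF.
by rewrite inE /= /act' LF nGa fol_act_folders.
Qed.

Lemma Fix_fol a : a \in 'N(G) -> 'Fix_(folders G rep | folAction)[a] = fol_fix G rep g a.
Proof.
move=> nGa; apply/setP => L; rewrite in_setI [RHS]inE.
case LF: (L \in folders G rep) => //=.
by rewrite inE sub1set inE /= /act' LF nGa.
Qed.

Lemma orbits_fol : [set orbit folAction 'N(G) x | x in folders G rep] = fol_orbits G rep g.
Proof.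
apply: eq_in_imset => L LF; apply: eq_in_imset => a nGa.
by rewrite /= /act' LF nGa.
Qed.

Lemma burnside : (\sum_(f in 'N(G)) #|fol_fix G rep g f| = #|fol_orbits G rep g| * #|'N(G)|)%N.
Proof.
rewrite -orbits_fol -(Frobenius_Cauchy acts_fol).
by apply: eq_bigr => a nGa; rewrite Fix_fol.
Qed.


Section Fixf.
Variables (f : {perm T}) (C : {set T}).
Hypothesis nGf : f \in 'N(G).
Hypothesis hC : cycle_reps rep f C.

Local Notation fb := (fbar rep f).
Local Notation V := (T * {perm T})%type.
Local Notation GV := (gvert G rep).

Lemma fbR w : fb w \in R.
Proof. exact: repR. Qed.

Lemma repR_eq u : u \in R -> rep u = u.
Proof. by rewrite inRP => /eqP. Qed.

Lemma fb_back u : u \in R -> rep (f^-1 (fb u)) = u.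
Proof.
move=> uR; rewrite /fbar rep_p_rep ?groupV // permK; exact: repR_eq.
Qed.

Lemma fb_fwd w : w \in R -> fb (rep (f^-1 w)) = w.
Proof. by move=> wR; rewrite /fbar rep_p_rep // permKV repR_eq. Qed.

Lemma fb_inj : {in R &, injective fb}.
Proof. by move=> u w uR wR e; rewrite -(fb_back uR) -(fb_back wR) e. Qed.

Definition sig0 (v : V) : V := (fb v.1, (v.2 ^ g (f^-1 (fb v.1))) ^ f).
Definition sig (v : V) : V := if v \in GV then sig0 v else v.

Lemma gvP (v : V) : (v \in GV) = (v.1 \in R) && (v.2 \in CGstab G v.1).
Proof. by rewrite inE. Qed.

Lemma sig0_gv v : v \in GV -> sig0 v \in GV.
Proof.
rewrite !gvP /sig0 /= => /andP[vR vC]; rewrite fbR /=.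
set y := f^-1 (fb v.1).
have : v.2 \in CGstab G (rep y) by rewrite /y fb_back.
move=> /(CGstabJ (subsetP (normG G) _ (gG y))); rewrite (proj2 (hg y)).
by move=> /(CGstabJ nGf); rewrite /y permKV.
Qed.

Lemma sig_gv v : (sig v \in GV) = (v \in GV).
Proof.
rewrite /sig; case: ifP => // vG; by rewrite sig0_gv.
Qed.

Lemma sig_inj : injective sig.
Proof.
move=> u w; rewrite /sig.
case: (boolP (u \in GV)) => uG; case: (boolP (w \in GV)) => wG.
- rewrite /sig0; case: u uG => u1 u2; case: w wG => w1 w2.
  rewrite !gvP /= => /andP[u1R _] /andP[w1R _] [e1 e2].
  have e : u1 = w1 by apply: fb_inj.
  by move: e2; rewrite e => /conjg_inj /conjg_inj ->.
- by move=> e; move: wG; rewrite -e sig0_gv.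
- by move=> e; move: uG; rewrite e sig0_gv.
- by [].
Qed.

Lemma sig_fb v : v \in GV -> (sig v).1 = fb v.1.
Proof. by rewrite /sig => ->. Qed.

Lemma gedgeE u v : gedge G rep g f u v = (u \in GV) && (v == sig u).
Proof.
rewrite /gedge; case: (boolP (u \in GV)) => //= uG.
rewrite g_inv /sig uG.
apply/idP/idP.
  case/andP => vG /andP[/eqP e1 /eqP e2].
  have ev1 : v.1 = fb u.1 by rewrite e1 fb_fwd //; move: vG; rewrite gvP => /andP[].
  by case: v vG e1 e2 ev1 => v1 v2 /= _ _ -> ->.
move/eqP => ->; rewrite sig0_gv //= fb_back //; last by move: uG; rewrite gvP => /andP[].
by rewrite !eqxx.
Qed.

Definition cset (v : V) : {set V} := [set w | fconnect sig v w].
Definition cedges (S : {set V}) : {set V * V} := [set (w, sig w) | w in S].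

Lemma dcverts_cedges S : dcverts (cedges S) = S.
Proof.
apply/setP => w; apply/imsetP/idP => [[e /imsetP[u uS ->] ->] //|wS].
by exists (w, sig w) => //; apply/imsetP; exists w.
Qed.

Lemma cset_gv v w : v \in GV -> w \in cset v -> w \in GV.
Proof.
move=> vG; rewrite inE => vw.
by apply: (closed_conn (P := fun z => z \in GV)) vw vG => z; rewrite sig_gv.
Qed.

Lemma D1 v : v \in GV -> is_dcycle (gedge G rep g f) (cedges (cset v)).
Proof.
move=> vG; exists (fingraph.orbit sig v); split.
- by case: (fingraph.orbit sig v) (in_orbit sig v).
- exact: orbit_uniq.
- apply: (sub_in_cycle (P := GV)); last exact: cycle_orbit sig_inj v.
    by move=> x y xG _ /=; rewrite gedgeE xG eq_sym.
  by apply/allP => w; rewrite -fconnect_orbit => vw; apply: (cset_gv vG); rewrite inE.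
- apply/setP => e; rewrite inE (cycle_zip (h := sig)).
  + rewrite -fconnect_orbit; apply/imsetP/idP => [[w wS ->]|/andP[he /eqP e2]].
      by move: wS; rewrite inE /= eqxx andbT.
    by exists e.1; [rewrite inE | case: e e2 {he} => ? ? /= ->].
  + by case: (fingraph.orbit sig v) (in_orbit sig v).
  + exact: cycle_orbit sig_inj v.
Qed.

Lemma D2 A : is_dcycle (gedge G rep g f) A -> exists2 v, v \in GV & A = cedges (cset v).
Proof.
case=> s [sn us cs ->].
have cs' : path.cycle (frel sig) s.
  by apply: sub_cycle cs => x y; rewrite gedgeE => /andP[_ /eqP ->] /=.
case: s sn us cs cs' => // x p _ us cs cs'.
have xG : x \in GV.
  by move: cs; rewrite /= ; case: p {us cs'} => [|a p] /=; rewrite gedgeE => /andP[/andP[]].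
exists x => //; apply/setP => e; rewrite inE (cycle_zip (h := sig)) //.
apply/idP/imsetP => [/andP[he /eqP e2]|[w]]; last first.
  by rewrite inE (fconnect_cycle cs' (mem_head x p)) => wS ->; rewrite /= wS eqxx.
exists e.1; first by rewrite inE (fconnect_cycle cs' (mem_head x p)).
by case: e e2 {he} => ? ? /= ->.
Qed.


Lemma folG L u : L \in folders G rep -> u \in R -> (u, L u) \in GV.
Proof. by move=> /folP LF uR; rewrite gvP /= uR; have := LF u; rewrite uR. Qed.

Lemma fixE L : L \in fol_fix G rep g f <->
  L \in folders G rep /\ (forall u, u \in R -> sig (u, L u) = (fb u, L (fb u))).
Proof.
split.
  rewrite inE => /andP[LF /eqP E]; split => // u uR.
  rewrite /sig folG // /sig0 /=; congr pair.
  rewrite -{2}E ffunE fbR /= g_inv fb_back //.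
case=> LF H; rewrite inE LF /=; apply/eqP/ffunP => w; rewrite ffunE.
case wR: (w \in R); last by move/folP: LF => /(_ w); rewrite wR => /eqP.
rewrite /= g_inv; set u := rep (f^-1 w).
have := H u (repR _); rewrite /sig folG ?repR // /sig0 /= /u fb_fwd //.
by case.
Qed.

Lemma iter_sig L u n : L \in fol_fix G rep g f -> u \in R ->
  iter n sig (u, L u) = (iter n fb u, L (iter n fb u)).
Proof.
case/fixE => LF H uR; elim: n => //= n ->.
rewrite H //; case: n => //= n; exact: fbR.
Qed.

Lemma cset_fix L x w : L \in fol_fix G rep g f -> x \in R -> fconnect sig (x, L x) w ->
  w = (w.1, L w.1) /\ fconnect fb x w.1.
Proof.
move=> Lfix xR /iter_findex; set n := findex _ _ _ => <-.
by rewrite iter_sig //= ; split => //; apply: fconnect_iter.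
Qed.

Lemma cset_fix2 L x w : L \in fol_fix G rep g f -> x \in R -> fconnect fb x w ->
  (w, L w) \in cset (x, L x).
Proof.
move=> Lfix xR /iter_findex; set n := findex _ _ _ => <-.
by rewrite -iter_sig // inE fconnect_iter.
Qed.

Definition hmap (L : {ffun T -> {perm T}}) : {ffun T -> {set V * V}} :=
  [ffun x => if x \in C then cedges (cset (x, L x)) else set0].

Lemma CR x : x \in C -> x \in R.
Proof. by case: hC => /subsetP sCR _; apply: sCR. Qed.

Lemma hmap_tuple L : L \in fol_fix G rep g f -> hmap L \in cycle_tuples G rep g f C.
Proof.
move=> Lfix; have [LF _] := fixE L; have {}LF := LF Lfix; case: LF => LF _.
rewrite inE; apply/forallP => x; rewrite ffunE.
case xC: (x \in C) => //; have xR := CR xC.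
rewrite inE; apply/and3P; split.
- by apply/boolp.asboolP; apply: D1; apply: folG.
- apply/forallP => t; rewrite dcverts_cedges; apply/card_le1_eqP => v w.
  rewrite !inE => /andP[vS /eqP vt] /andP[wS /eqP wt].
  have [-> _] := cset_fix Lfix xR vS; have [-> _] := cset_fix Lfix xR wS.
  by rewrite vt wt.
- rewrite dcverts_cedges; apply/subsetP => v; rewrite !inE => vS.
  by have [_] := cset_fix Lfix xR vS.
Qed.

Lemma Crep_ex w : w \in R -> exists2 x, x \in C & fconnect fb x w.
Proof.
move=> wR; case: hC => _ /(_ w wR) /eqP /cards1P [x0 Ex].
have : x0 \in [set x in C | fconnect fb x w] by rewrite Ex inE.
by rewrite inE => /andP[x0C x0w]; exists x0.
Qed.

Lemma Crep_uniq w x x' : w \in R -> x \in C -> x' \in C ->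
  fconnect fb x w -> fconnect fb x' w -> x = x'.
Proof.
move=> wR xC x'C xw x'w; case: hC => _ /(_ w wR) /eqP /cards1P [x0 Ex].
have : x \in [set x in C | fconnect fb x w] by rewrite inE xC.
have : x' \in [set x in C | fconnect fb x w] by rewrite inE x'C.
by rewrite Ex !inE => /eqP -> /eqP ->.
Qed.

Lemma hmap_inj : {in fol_fix G rep g f &, injective hmap}.
Proof.
move=> L1 L2 F1 F2 E; apply/ffunP => w.
have [[LF1 _] [LF2 _]] := (fixE L1, fixE L2).
case: (LF1 F1) (LF2 F2) => /folP H1 _ [/folP H2 _].
case wR: (w \in R); last first.
  by have := H1 w; have := H2 w; rewrite wR => /eqP -> /eqP ->.
have [x xC xw] := Crep_ex wR; have xR := CR xC.
have : hmap L1 x = hmap L2 x by rewrite E.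
rewrite !ffunE xC => /(congr1 (@dcverts _)); rewrite !dcverts_cedges => Ex.
have := cset_fix2 F1 xR xw; rewrite Ex inE => /(cset_fix F2 xR) [/= e _].
by case: e.
Qed.


Lemma iter_sig_gv v n : v \in GV -> iter n sig v \in GV /\ (iter n sig v).1 = iter n fb v.1.
Proof.
move=> vG; elim: n => [|n [iG i1]] //=.
by rewrite sig_gv iG sig_fb // i1.
Qed.

Lemma cset_eq v w : fconnect sig v w -> cset v = cset w.
Proof.
move=> vw; apply/setP => u; rewrite !inE; apply/idP/idP => [vu|wu].
  by apply: connect_trans vu; rewrite (fconnect_sym sig_inj).
exact: connect_trans wu.
Qed.

Section Surj.
Variable c : {ffun T -> {set V * V}}.
Hypothesis cT : c \in cycle_tuples G rep g f C.

Local Notation S x := (dcverts (c x)).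

Lemma c_spec x : x \in C ->
  [/\ exists2 v, v \in GV & S x = cset v,
      c x = cedges (S x),
      forall t, #|[set v in S x | v.1 == t]| <= 1 &
      forall v, v \in S x -> fconnect fb x v.1].
Proof.
move=> xC; move: cT; rewrite inE => /forallP /(_ x); rewrite xC inE.
case/and3P => /boolp.asboolP /D2 [v vG cx] /forallP sh /subsetP sub.
split.
- by exists v => //; rewrite cx dcverts_cedges.
- by rewrite cx dcverts_cedges.
- exact: sh.
- by move=> u /sub; rewrite !inE.
Qed.

Definition W := \bigcup_(x in C) S x.

Definition Lam : {ffun T -> {perm T}} :=
  [ffun w => if w \in R then (if [pick v in W | v.1 == w] is Some v then v.2 else 1) else 1].

Lemma Lspec x v : x \in C -> v \in S x -> v.1 \in R /\ Lam v.1 = v.2.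
Proof.
move=> xC vS; have [[v0 v0G Sx] _ sh con] := c_spec xC.
have vG : v \in GV by apply: (cset_gv v0G); rewrite -Sx.
have v1R : v.1 \in R by move: vG; rewrite gvP => /andP[].
split => //; rewrite ffunE v1R.
case: pickP => [v' /andP[/bigcupP[x' x'C v'S] /eqP e1]|].
  have [_ _ _ con'] := c_spec x'C.
  have ex : x' = x.
    by apply: (Crep_uniq v1R x'C xC); [rewrite -e1; apply: con' | apply: con].
  move: v'S; rewrite ex => v'S.
  have -> // : v' = v.
  by apply: (card_le1_eqP (sh v.1)); rewrite inE ?v'S ?vS ?e1 eqxx.
by move/(_ v); rewrite eqxx andbT => /negP; case; apply/bigcupP; exists x.
Qed.

Lemma Lexist x w : x \in C -> fconnect fb x w -> (w, Lam w) \in S x.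
Proof.
move=> xC xw; have [[v0 v0G Sx] _ sh con] := c_spec xC.
have v0S : v0 \in S x by rewrite Sx inE connect0.
have v0R : v0.1 \in R by move: v0G; rewrite gvP => /andP[].
have xR := CR xC.
have v0w : fconnect fb v0.1 w.
  apply: connect_trans xw; rewrite (fconnect_sym_in (S := R)) //.
  - exact: con.
  - by move=> ? _; apply: fbR.
  - exact: fb_inj.
have [iG i1] := iter_sig_gv (findex fb v0.1 w) v0G.
rewrite (iter_findex v0w) in i1.
have iS : iter (findex fb v0.1 w) sig v0 \in S x by rewrite Sx inE fconnect_iter.
have [_ L1] := Lspec xC iS; rewrite i1 in L1.
by rewrite L1 -{1}i1 -surjective_pairing.
Qed.

Lemma Lam_fol : Lam \in folders G rep.
Proof.
apply/folP => w; case wR: (w \in R); last by rewrite ffunE wR.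
have [x xC xw] := Crep_ex wR.
have [[v0 v0G Sx] _ _ _] := c_spec xC.
have := Lexist xC xw; rewrite Sx => /(cset_gv v0G).
by rewrite gvP => /andP[].
Qed.

Lemma Lam_fix : Lam \in fol_fix G rep g f.
Proof.
apply/fixE; split; first exact: Lam_fol.
move=> u uR; have [x xC xu] := Crep_ex uR.
have [[v0 v0G Sx] _ _ _] := c_spec xC.
have uS := Lexist xC xu.
have uG : (u, Lam u) \in GV by apply: (cset_gv v0G); rewrite -Sx.
have sS : sig (u, Lam u) \in S x.
  move: uS; rewrite Sx !inE => h; apply: connect_trans h _; exact: fconnect1.
have [_ L1] := Lspec xC sS.
by rewrite (surjective_pairing (sig (u, Lam u))) -L1 !sig_fb.
Qed.

Lemma hmap_Lam : hmap Lam = c.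
Proof.
apply/ffunP => x; rewrite ffunE; case xC: (x \in C).
  have [[v0 v0G Sx] cx _ _] := c_spec xC.
  have := Lexist xC (connect0 _ x); rewrite Sx inE => /cset_eq <-.
  by rewrite cx Sx.
by move: cT; rewrite inE => /forallP /(_ x); rewrite xC => /eqP ->.
Qed.

End Surj.

Lemma hmap_onto : hmap @: fol_fix G rep g f = cycle_tuples G rep g f C.
Proof.
apply/setP => c; apply/imsetP/idP => [[L LF ->]|cT]; first exact: hmap_tuple.
by exists (Lam c); [apply: Lam_fix | rewrite hmap_Lam].
Qed.


Lemma card_tuples : #|cycle_tuples G rep g f C| = (\prod_(x in C) gamma_r G rep g f x)%N.
Proof.
pose F := fun x : T => [pred A : {set V * V} | if x \in C then A \in short_cycles G rep g f x else A == set0].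
have -> : cycle_tuples G rep g f C = [set c in family F].
  by apply/setP => c; rewrite !inE.
rewrite cardsE card_family.
have -> : forall s : seq T, foldr muln 1%N [seq #|F x| | x <- s] = (\prod_(x <- s) #|F x|)%N.
  by elim=> [|a s IH]; rewrite ?big_nil ?big_cons //= IH.
rewrite big_enum /= [RHS]big_mkcond /=; apply: eq_bigr => x _.
rewrite /gamma_r; case xC: (x \in C) => /=.
  by apply: eq_card => A; rewrite !inE xC.
by rewrite -(card1 (set0 : {set V * V})); apply: eq_card => A; rewrite !inE xC.
Qed.

End Fixf.
End Main.

Theorem theorem5p4 (T : finType) (G : {group {perm T}})
  (rep : T -> T) (g : T -> {perm T}) (Cyc : {perm T} -> {set T})
  (hrep_orb : forall y, rep y \in orbit 'P G y)
  (hrep_eq : forall y y', y' \in orbit 'P G y -> rep y' = rep y)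
  (hg : forall y, g y \in G /\ g y (rep y) = y)
  (hCyc : forall f, f \in 'N(G) -> cycle_reps rep f (Cyc f)) :
  (forall f, f \in 'N(G) ->
     exists h : {ffun T -> {perm T}} ->
                {ffun T -> {set (T * {perm T}) * (T * {perm T})}},
       {in fol_fix G rep g f &, injective h} /\
       h @: fol_fix G rep g f = cycle_tuples G rep g f (Cyc f)) /\
  (((#|fol_orbits G rep g|)%:R : rat)
     = ((\sum_(f in 'N(G)) #|fol_fix G rep g f|)%:R : rat) / (#|'N(G)|)%:R)%R /\
  \sum_(f in 'N(G)) #|fol_fix G rep g f|
     = \sum_(f in 'N(G)) \prod_(x in Cyc f) gamma_r G rep g f x.
Proof.
split.
  move=> f nGf; exists (hmap G rep g f (Cyc f)); split.
  - exact: (hmap_inj hrep_orb hrep_eq hg nGf (hCyc f nGf)).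
  - exact: (hmap_onto hrep_orb hrep_eq hg nGf (hCyc f nGf)).
split.
  rewrite (burnside hrep_orb hrep_eq hg) GRing.natrM GRing.mulfK //.
  by rewrite Num.Theory.pnatr_eq0 -lt0n cardG_gt0.
apply: eq_bigr => f nGf.
rewrite -(card_tuples G rep g f (Cyc f)).
rewrite -(hmap_onto hrep_orb hrep_eq hg nGf (hCyc f nGf)) card_in_imset //.
exact: (hmap_inj hrep_orb hrep_eq hg nGf (hCyc f nGf)).
Qed.
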